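(* Fix $p\ge1$, $v\in\mathbb{R}^p$ and a $p\times p$ matrix $Q$ that is positive definite or zero. Let $\{(X_i,Y_i)\}_{i=1}^\infty$ be random pairs with $X_i\in\mathbb{R}^p$, $Y_i\in\{0,1\}$ satisfying (A1) they are i.i.d. with $Y_i\mid X_i\sim\mathrm{Bernoulli}(G(X_i))$ for some measurable $G:\mathbb{R}^p\to(0,1)$; (A2) $\mathbb{E}X_1X_1^T$ is finite and positive definite; (A3) for every open orthant $S_j$ of $\mathbb{R}^p$ ($j=1,\dots,2^p$) and every $\beta\ne0$, $\mathbb{P}\big((1_{S_j}(X_1)+1_{S_j}(-X_1))X_1^T\beta\ne0\big)>0$. Then, almost surely, the posterior distribution based on $\{(X_i,Y_i)\}_{i=1}^n$ is proper for all sufficiently large $n$.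
   Context: The posterior based on $\{(X_i,Y_i)\}_{i=1}^n$ is the (possibly improper) density $\pi(\beta)\propto\prod_{i=1}^n\Phi(X_i^T\beta)^{Y_i}(1-\Phi(X_i^T\beta))^{1-Y_i}\exp\{-\frac12(\beta-v)^TQ(\beta-v)\}$ on $\mathbb{R}^p$, with $\Phi$ the standard normal cdf; it is proper if the right-hand side is integrable over $\mathbb{R}^p$. *)

(* Defs.v *)
From HB Require Import structures.
From mathcomp Require Import all_boot all_order all_algebra.
From mathcomp Require Import all_classical all_reals all_analysis.
Set Implicit Arguments. Unset Strict Implicit. Unset Printing Implicit Defensive.
Import Order.TTheory GRing.Theory Num.Theory.
Import numFieldNormedType.Exports.
Local Open Scope ring_scope.
Local Open Scope classical_set_scope.

Definition Rvec (R : realType) (p : nat) :=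
  g_sigma_algebraType (open : set_system 'rV[R]_p).

Definition posdef (R : realType) (p : nat) (M : 'M[R]_p) : Prop :=
  M^T = M /\ forall x : 'cV[R]_p, x != 0 -> 0 < (x^T *m M *m x) 0 0.

Definition Phi (R : realType) (x : R) : R :=
  fine (normal_prob 0 1 `]-oo, x]).

(* The open orthant of R^p with sign pattern s (s k = true : k-th coordinate
   positive, false : negative); the 2^p open orthants are the orthant s. *)
Definition orthant (R : realType) (p : nat) (s : 'I_p -> bool) : set 'rV[R]_p :=
  [set x | forall k, if s k then 0 < x 0 k else x 0 k < 0].

(* Iterated Lebesgue integral over R^n of a function of coordinates
   b 0, ..., b (n-1).  For nonnegative measurable integrands this is (Tonelli)
   the Lebesgue integral over R^n. *)
Fixpoint iter_leb_int (R : realType) (n : nat) (f : (nat -> R) -> \bar R)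
  : \bar R :=
  match n with
  | 0 => f (fun _ => 0)
  | n'.+1 => (\int[lebesgue_measure]_(x in [set: R])
                iter_leb_int n' (fun b => f (fun k => if k == n' then x else b k)))%E
  end.

Definition leb_int_Rp (R : realType) (p : nat) (g : 'cV[R]_p -> \bar R) : \bar R :=
  iter_leb_int p (fun b => g (\col_(k < p) b (nat_of_ord k))).

(* Unnormalized probit posterior density based on the first n data points
   (X_1,Y_1),...,(X_n,Y_n) (indices 0..n-1 here), with Y_i in {0,1}:
   prod_i Phi(X_i^T b)^{Y_i} (1 - Phi(X_i^T b))^{1 - Y_i}
          * exp(-1/2 (b - v)^T Q (b - v)). *)
Definition probit_post (R : realType) (p : nat) (Xs : nat -> 'rV[R]_p)
  (Ys : nat -> R) (v : 'cV[R]_p) (Q : 'M[R]_p) (n : nat) (b : 'cV[R]_p) : R :=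
  (\prod_(i < n)
     (if Ys i == 1 then Phi ((Xs i *m b) 0 0) else 1 - Phi ((Xs i *m b) 0 0)))
  * expR (- (((b - v)^T *m Q *m (b - v)) 0 0) / 2).

Definition posterior_proper (R : realType) (p : nat) (Xs : nat -> 'rV[R]_p)
  (Ys : nat -> R) (v : 'cV[R]_p) (Q : 'M[R]_p) (n : nat) : Prop :=
  (leb_int_Rp (fun b => (probit_post Xs Ys v Q n b)%:E) < +oo)%E.

Definition indep_seq d (T : measurableType d) (R : realType) (P : probability T R)
  d' (U : measurableType d') (Z : nat -> T -> U) : Prop :=
  forall (I : seq nat) (B : nat -> set U), uniq I ->
    (forall i, measurable (B i)) ->
    P (\bigcap_(i in [set` I]) (Z i @^-1` B i)) = (\prod_(i <- I) P (Z i @^-1` B i))%E.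

Definition ident_distr d (T : measurableType d) (R : realType) (P : probability T R)
  d' (U : measurableType d') (Z : nat -> T -> U) : Prop :=
  forall i (B : set U), measurable B -> P (Z i @^-1` B) = P (Z 0 @^-1` B).

(* Main.v *)
Require Import Defs.
From HB Require Import structures.
From mathcomp Require Import all_boot all_order all_algebra.
From mathcomp Require Import all_classical all_reals all_analysis.
From mathcomp Require Import ring lra.
From mathcomp Require Import measurable_realfun normal_distribution.
Import Order.TTheory GRing.Theory Num.Theory.
Import numFieldNormedType.Exports.
Local Open Scope ring_scope.
Local Open Scope classical_set_scope.

Section analytic.
Context {R : realType}.
Local Open Scope ereal_scope.
Notation mu := (@lebesgue_measure R).

Lemma le_integralT_nm (f g : R -> \bar R) :
  (forall x, 0 <= f x) -> (forall x, f x <= g x) ->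
  \int[mu]_(x in [set: R]) f x <= \int[mu]_(x in [set: R]) g x.
Proof.
move=> f0 fg.
have g0 x : 0 <= g x by exact: le_trans (f0 x) (fg x).
rewrite !ge0_integralTE//.
apply: ge_ereal_sup => _ [h hf <-]; apply: ereal_sup_ubound; exists h => //= x.
exact: le_trans (hf x) (fg x).
Qed.

Lemma iter_ge0 n (f : (nat -> R) -> \bar R) : (forall b, 0 <= f b) -> 0 <= iter_leb_int n f.
Proof.
elim: n f => [|n IH] f f0 /=; first exact: f0.
apply: integral_ge0 => x _; apply: IH => b; exact: f0.
Qed.

Lemma iter_le n (f g : (nat -> R) -> \bar R) : (forall b, 0 <= f b) -> (forall b, f b <= g b) ->
  iter_leb_int n f <= iter_leb_int n g.
Proof.
elim: n f g => [|n IH] f g f0 fg /=; first exact: fg.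
apply: le_integralT_nm => x; first by apply: iter_ge0 => b; exact: f0.
by apply: IH => b; [exact: f0|exact: fg].
Qed.

Lemma iter_prod n (h : R -> R) (I : R) (c : R) :
  (forall x, (0 <= h x)%R) -> measurable_fun setT h ->
  \int[mu]_x (h x)%:E = I%:E -> (0 <= c)%R ->
  iter_leb_int n (fun b => (c * \prod_(k < n) h (b k))%:E) = (c * I ^+ n)%:E.
Proof.
move=> h0 mh hI.
have I0 : (0 <= I)%R by rewrite -lee_fin -hI; apply: integral_ge0 => x _; rewrite lee_fin.
elim: n c => [|n IH] c c0 /=.
  by rewrite big_ord0 expr0.
transitivity (\int[mu]_(x in [set: R]) ((c * I ^+ n)%:E * (h x)%:E)).
  apply: eq_integral => x _.
  have -> : (fun b : nat -> R => (c * \prod_(k < n.+1) h (if k == n :> nat then x else b k))%:E)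
     = (fun b : nat -> R => ((c * h x) * \prod_(k < n) h (b k))%:E).
    apply: funext => b; rewrite big_ord_recr /= eqxx.
    rewrite (eq_bigr (fun k : 'I_n => h (b k))); last first.
      by move=> k _; rewrite /= ifF // (ltn_eqF (ltn_ord k)).
    congr EFin; ring.
  by rewrite IH ?mulr_ge0// -EFinM; congr EFin; ring.
rewrite ge0_integralZl//.
- by rewrite hI -EFinM exprSr mulrA.
- exact/measurable_EFinP.
- by move=> x Hx; have := h0 x; rewrite -lee_fin.
- by rewrite lee_fin mulr_ge0// exprn_ge0.
Qed.


Lemma fine_le_ub (e : \bar R) (c : R) : 0 <= e -> e <= c%:E -> (fine e <= c)%R.
Proof. by case: e => [r| |] //=; rewrite ?lee_fin. Qed.

Lemma normal_pdf_shift (t x : R) : (0 <= t * (x - t))%R ->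
  (normal_pdf 0 1 x <= expR (- (t ^+ 2) / 2) * normal_pdf t 1 x)%R.
Proof.
move=> H.
rewrite !normal_pdfE ?oner_neq0 //= /normal_fun.
rewrite mulrCA ler_wpM2l ?normal_peak_ge0// -expRD ler_expR expr1n.
rewrite (_ : (1 *+ 2 : R)%R = 2%R) // subr0.
nra.
Qed.

Lemma normal_prob_le (A : set R) (t c : R) : measurable A -> (0 <= c)%R ->
  (forall x, A x -> normal_pdf 0 1 x <= c * normal_pdf t 1 x)%R ->
  normal_prob 0 1 A <= c%:E.
Proof.
move=> mA c0 H; rewrite /normal_prob.
apply: (@le_trans _ _ (\int[mu]_(x in A) (c%:E * (normal_pdf t 1 x)%:E))).
  apply: ge0_le_integral => //.
  - by move=> x _; rewrite lee_fin normal_pdf_ge0.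
  - apply/measurable_EFinP; apply: measurable_funTS; exact: measurable_normal_pdf.
  - apply/measurable_EFinP; apply: measurable_funTS.
    by apply: measurable_funM => //; exact: measurable_normal_pdf.
have -> : \int[mu]_(x in A) (c%:E * (normal_pdf t 1 x)%:E) =
    c%:E * \int[mu]_(x in A) (normal_pdf t 1 x)%:E.
  apply: ge0_integralZl => //.
  - apply/measurable_EFinP; apply: measurable_funTS; exact: measurable_normal_pdf.
  - by move=> x _; rewrite lee_fin normal_pdf_ge0.
rewrite -[X in _ <= X]mule1; apply: lee_wpmul2l; first by rewrite lee_fin.
rewrite -(integral_normal_pdf t 1).
apply: ge0_subset_integral => //.
- apply/measurable_EFinP; exact: measurable_normal_pdf.
- by move=> x _; rewrite lee_fin normal_pdf_ge0.
Qed.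

Lemma Phi_ge0 (t : R) : (0 <= Phi t)%R.
Proof. by rewrite /Phi fine_ge0// measure_ge0. Qed.

Lemma Phi_le1 (t : R) : (Phi t <= 1)%R.
Proof.
rewrite /Phi; apply: fine_le_ub; first exact: measure_ge0.
by apply: probability_le1.
Qed.

Lemma Phi_tail_lo (t : R) : (t <= 0)%R -> (Phi t <= expR (- (t ^+ 2) / 2))%R.
Proof.
move=> t0; rewrite /Phi; apply: fine_le_ub; first exact: measure_ge0.
apply: (@normal_prob_le _ t) => //.
move=> x; rewrite /= in_itv /= => xt.
apply: normal_pdf_shift; nra.
Qed.

Lemma Phi_tail_hi (t : R) : (0 <= t)%R -> (1 - Phi t <= expR (- (t ^+ 2) / 2))%R.
Proof.
move=> t0; rewrite /Phi.
set A := (X in normal_prob 0 1 X).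
have mA : measurable A by exact: measurable_itv.
have -> : normal_prob 0 1 A = 1 - normal_prob 0 1 (~` A).
  by rewrite -probability_setC ?setCK//; exact: measurableC.
rewrite fineB// ?fin_num_measure//; last exact: measurableC.
rewrite opprB addrC subrK.
apply: fine_le_ub; first exact: measure_ge0.
apply: (@normal_prob_le _ t) => //; first exact: measurableC.
move=> x; rewrite /A /= in_itv /= => xt.
apply: normal_pdf_shift.
have : (t < x)%R by rewrite ltNge; apply/negP.
nra.
Qed.


Lemma int_normal_fun (sg : R) : sg != 0%R ->
  \int[mu]_x (normal_fun 0 sg x)%:E = ((normal_peak sg)^-1)%:E.
Proof.
move=> sg0.
have pk0 := normal_peak_gt0 sg0.
have mf : measurable_fun setT (fun x => (normal_fun 0 sg x)%:E).
  by apply/measurable_EFinP; exact: measurable_normal_fun.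
have H : (normal_peak sg)%:E * \int[mu]_x (normal_fun 0 sg x)%:E = 1.
  rewrite -ge0_integralZl//; last 2 first.
    by move=> x _; have := normal_fun_ge0 0 sg x; rewrite -lee_fin.
    by have := ltW pk0; rewrite -lee_fin.
  rewrite -(integral_normal_pdf 0 sg); apply: eq_integral => x _.
  by rewrite normal_pdfE// -EFinM.
have X0 : 0 <= \int[mu]_x (normal_fun 0 sg x)%:E.
  by apply: integral_ge0 => x _; have := normal_fun_ge0 0 sg x; rewrite -lee_fin.
move: H X0; case: (\int[mu]_x (normal_fun 0 sg x)%:E) => [r| |] //=.
- move=> /eqP; rewrite -EFinM eqe => /eqP H _; congr EFin.
  transitivity ((normal_peak sg)^-1 * (normal_peak sg * r))%R.
    by rewrite mulKf// gt_eqF.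
  by rewrite H mulr1.
- by rewrite muleC gt0_mulye// lte_fin.
Qed.

End analytic.

Section det.
Context {R : realType}.

Lemma sqr_sum_ge n (F : 'I_n -> R) : (forall k, 0 <= F k) ->
  \sum_(k < n) F k ^+ 2 <= (\sum_(k < n) F k) ^+ 2.
Proof.
elim: n F => [|n IH] F F0; first by rewrite !big_ord0 expr0n.
rewrite !big_ord_recr /=.
have S0 : 0 <= \sum_(k < n) F (widen_ord (leqnSn n) k) by apply: sumr_ge0.
have := IH (fun k => F (widen_ord (leqnSn n) k)) (fun k => F0 _).
have := F0 ord_max.
nra.
Qed.

Lemma factor_bound p (x : 'rV[R]_p) (y : R) (bb : nat -> R) (m : R) :
  orthant [ffun k : 'I_p => bb k < 0] (if y == 1 then x else - x) ->
  (forall k, m <= `|(if y == 1 then x else - x) 0 k|) -> 0 < m ->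
  (if y == 1 then Phi ((x *m \col_(k < p) bb k) 0 0)
   else 1 - Phi ((x *m \col_(k < p) bb k) 0 0))
    <= \prod_(k < p) expR (- (m ^+ 2 * bb k ^+ 2) / 2).
Proof.
set z := (if y == 1 then x else - x) => Ho Hm m0.
set u := (z *m \col_(k < p) bb k) 0 0.
have Hu : u <= - (m * \sum_(k < p) `|bb k|).
  rewrite /u mxE mulr_sumr -sumrN; apply: ler_sum => k _.
  rewrite mxE.
  have := Ho k; have := Hm k; rewrite ffunE.
  case: (ltrP (bb k) 0) => hb /= hm hz.
    rewrite gtr0_norm // in hm; rewrite ltr0_norm //; nra.
  rewrite ltr0_norm // in hm; rewrite ger0_norm //; nra.
have ss0 : 0 <= \sum_(k < p) `|bb k| by apply: sumr_ge0 => k _.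
have Hsq : m ^+ 2 * \sum_(k < p) bb k ^+ 2 <= u ^+ 2.
  have := @sqr_sum_ge p (fun k : 'I_p => `|bb k|) (fun k => normr_ge0 _).
  under eq_bigr do rewrite real_normK ?num_real//.
  move=> h.
  set S := \sum_(k < p) `|bb k| in Hu ss0 h *.
  set T := \sum_(k < p) bb k ^+ 2 in h *.
  have mS0 : 0 <= m * S by rewrite mulr_ge0 // ltW.
  have ha : 0 <= - u - m * S by lra.
  have hb : 0 <= - u + m * S by lra.
  have h1 : (m * S) ^+ 2 <= u ^+ 2.
    have := mulr_ge0 ha hb; rewrite !expr2; lra.
  have h2 : m ^+ 2 * T <= m ^+ 2 * S ^+ 2 by rewrite ler_wpM2l // sqr_ge0.
  by rewrite exprMn in h1; exact: le_trans h2 h1.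
have Hexp : expR (- u ^+ 2 / 2) <= \prod_(k < p) expR (- (m ^+ 2 * bb k ^+ 2) / 2).
  rewrite -expR_sum ler_expR.
  rewrite -mulr_suml sumrN -mulr_sumr.
  nra.
apply: le_trans Hexp.
have Hu0 : u <= 0 by nra.
move: Hu Hu0; rewrite /u /z; case: ifP => hy Hu Hu0.
  exact: Phi_tail_lo.
rewrite mulNmx mxE in Hu0 *.
rewrite sqrrN; apply: Phi_tail_hi; by rewrite -oppr_le0.
Qed.


Lemma factor_ge0 (y t : R) : 0 <= (if y == 1 then Phi t else 1 - Phi t).
Proof. by case: ifP => _; rewrite ?subr_ge0 ?Phi_ge0 ?Phi_le1. Qed.

Lemma factor_le1 (y t : R) : (if y == 1 then Phi t else 1 - Phi t) <= 1.
Proof. by case: ifP => _; rewrite ?Phi_le1 // lerBlDr lerDl Phi_ge0. Qed.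

Lemma quad_ge0 p (Q : 'M[R]_p) (w : 'cV[R]_p) : (Q = 0 \/ posdef Q) ->
  0 <= (w^T *m Q *m w) 0 0.
Proof.
case=> [->|[_ HQ]]; first by rewrite mulmx0 mul0mx mxE.
have [->|w0] := eqVneq w 0; first by rewrite trmx0 !mul0mx mxE.
exact/ltW/HQ.
Qed.

Lemma post_ge0 p (Xs : nat -> 'rV[R]_p) (Ys : nat -> R) v Q n b :
  0 <= probit_post Xs Ys v Q n b.
Proof.
rewrite /probit_post mulr_ge0 ?expR_ge0 //.
by apply: prodr_ge0 => i _; exact: factor_ge0.
Qed.

Lemma post_bound p (Xs : nat -> 'rV[R]_p) (Ys : nat -> R) v Q n m (bb : nat -> R) :
  (Q = 0 \/ posdef Q) -> 0 < m ->
  (forall s : {ffun 'I_p -> bool}, exists i, (i < n)%N /\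
     orthant s (if Ys i == 1 then Xs i else - Xs i) /\
     forall k, m <= `|(if Ys i == 1 then Xs i else - Xs i) 0 k|) ->
  probit_post Xs Ys v Q n (\col_(k < p) bb k) <= \prod_(k < p) normal_fun 0 m^-1 (bb k).
Proof.
move=> HQ m0 Hs.
have [i [ilt [Ho Hm]]] := Hs [ffun k : 'I_p => bb k < 0].
rewrite /probit_post.
set E := expR _.
have E1 : E <= 1 by rewrite /E expR_le1 mulNr oppr_le0 divr_ge0 // quad_ge0.
have E0 : 0 <= E by exact: expR_ge0.
pose F := fun j : nat => (if Ys j == 1 then Phi ((Xs j *m \col_(k < p) bb k) 0 0)
   else 1 - Phi ((Xs j *m \col_(k < p) bb k) 0 0)).
have PF : \prod_(j < n) F j <= F i.
  rewrite (bigD1 (Ordinal ilt)) //= ler_piMr ?factor_ge0 //.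
  by apply: prodr_ile1 => j _; rewrite factor_ge0 factor_le1.
apply: (le_trans (ler_piMr _ E1)); first by apply: prodr_ge0 => j _; exact: factor_ge0.
apply: (le_trans PF).
apply: (le_trans (@factor_bound p (Xs i) (Ys i) bb m Ho Hm m0)).
rewrite le_eqVlt; apply/orP; left; apply/eqP; apply: eq_bigr => k _; rewrite /normal_fun; congr expR.
rewrite subr0 -mulr_natr; field.
by rewrite gt_eqF.
Qed.

Lemma det_proper p (Xs : nat -> 'rV[R]_p) (Ys : nat -> R) (v : 'cV[R]_p) (Q : 'M[R]_p) n m :
  (Q = 0 \/ posdef Q) -> 0 < m ->
  (forall s : {ffun 'I_p -> bool}, exists i, (i < n)%N /\
     orthant s (if Ys i == 1 then Xs i else - Xs i) /\
     forall k, m <= `|(if Ys i == 1 then Xs i else - Xs i) 0 k|) ->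
  posterior_proper Xs Ys v Q n.
Proof.
move=> HQ m0 Hs.
rewrite /posterior_proper /leb_int_Rp.
have sg0 : m^-1 != 0 by rewrite invr_neq0 // gt_eqF.
have hI := @int_normal_fun R m^-1 sg0.
apply: (le_lt_trans (@iter_le R p _ (fun b => (1 * \prod_(k < p) normal_fun 0 m^-1 (b k))%:E) _ _)).
- by move=> b; rewrite lee_fin; exact: post_ge0.
- by move=> b; rewrite lee_fin mul1r; exact: post_bound.
rewrite (@iter_prod R p _ _ 1 (fun x => normal_fun_ge0 0 m^-1 x) (measurable_normal_fun 0 m^-1) hI) //.
exact: ltry.
Qed.

End det.

Section meas.
Context {R : realType} {p : nat}.

Lemma open_forall (r : seq 'I_p) (P : 'I_p -> set 'rV[R]_p) :
  (forall k, open (P k)) -> open [set x | forall k, k \in r -> P k x].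
Proof.
move=> HP; elim: r => [|a r IH].
  rewrite (_ : [set x | _] = setT); first exact: openT.
  by apply/seteqP; split => x //= _ k; rewrite in_nil.
rewrite (_ : [set x | _] = P a `&` [set x | forall k, k \in r -> P k x]).
  exact: openI.
apply/seteqP; split => x /=.
  by move=> H; split; [apply: H; rewrite mem_head|move=> k kr; apply: H; rewrite in_cons kr orbT].
by move=> [Pa H] k; rewrite in_cons => /orP [/eqP ->//|]; exact: H.
Qed.

Lemma open_orthant (s : 'I_p -> bool) : open (orthant s : set 'rV[R]_p).
Proof.
rewrite (_ : orthant s = [set x | forall k, k \in enum 'I_p ->
    (fun k => [set x : 'rV[R]_p | if s k then 0 < x 0 k else x 0 k < 0]) k x]).
  apply: open_forall => k.
  have -> : [set x : 'rV[R]_p | if s k then 0 < x 0 k else x 0 k < 0] =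
    (fun x : 'rV[R]_p => x 0 k) @^-1` (if s k then [set y | 0 < y] else [set y | y < 0]).
    by apply/seteqP; split => x /=; case: (s k).
  apply: (@open_comp _ _ (fun x : 'rV[R]_p => x 0 k)); first by move=> x _; exact: coord_continuous.
  by case: (s k); [exact: open_gt|exact: open_lt].
apply/seteqP; split => x /= H k; first by move=> _; exact: H.
by apply: H; rewrite mem_enum.
Qed.

Lemma measurable_orthant (s : 'I_p -> bool) :
  measurable (orthant s : set (Rvec R p)).
Proof. by apply: sub_gen_smallest; exact: open_orthant. Qed.

Lemma measurable_orthantN (s : 'I_p -> bool) :
  measurable ([set x : Rvec R p | orthant s (- (x : 'rV[R]_p))]).
Proof.
rewrite (_ : [set x | _] = orthant (fun k => ~~ s k)); first exact: measurable_orthant.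
apply/seteqP; split => x /= H k; have := H k; rewrite mxE; case: (s k) => /=;
  by rewrite ?oppr_gt0 ?oppr_lt0.
Qed.

End meas.

Section fin.
Context {R : realType}.

Lemma fin_max (T : finType) (P : T -> nat -> Prop) :
  (forall a, exists N, P a N) -> (forall a N N', P a N -> (N <= N')%N -> P a N') ->
  exists N, forall a, P a N.
Proof.
move=> H Hm.
suff: forall r : seq T, exists N, forall a, a \in r -> P a N.
  by move=> /(_ (enum T)) [N HN]; exists N => a; apply: HN; rewrite mem_enum.
elim => [|b r [N IH]]; first by exists 0%N.
have [Nb Hb] := H b.
exists (maxn N Nb) => a; rewrite in_cons => /orP [/eqP ->|ar].
  by apply: Hm Hb _; rewrite leq_maxr.
by apply: Hm (IH a ar) _; rewrite leq_maxl.
Qed.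

Lemma fin_min (T : finType) (P : T -> R -> Prop) :
  (forall a, exists m, 0 < m /\ P a m) ->
  (forall a m m', P a m -> 0 < m' -> m' <= m -> P a m') ->
  exists m, 0 < m /\ forall a, P a m.
Proof.
move=> H Hm.
suff: forall r : seq T, exists m, 0 < m /\ forall a, a \in r -> P a m.
  by move=> /(_ (enum T)) [m [m0 HN]]; exists m; split => // a; apply: HN; rewrite mem_enum.
elim => [|b r [m [m0 IH]]]; first by exists 1; split.
have [mb [mb0 Hb]] := H b.
exists (Num.min m mb); split; first by rewrite lt_min m0 mb0.
move=> a; rewrite in_cons => /orP [/eqP ->|ar].
  by apply: Hm Hb _ _; rewrite ?lt_min ?m0 ?mb0 // ge_min lexx orbT.
by apply: Hm (IH a ar) _ _; rewrite ?lt_min ?m0 ?mb0 // ge_min lexx.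
Qed.

End fin.

Section prob.
Context {R : realType} {d : measure_display} {T : measurableType d} (P : probability T R).
Local Open Scope ereal_scope.

Lemma integral_pos (A : set T) (f : T -> R) :
  measurable A -> measurable_fun setT f -> (forall t, (0 < f t)%R) -> 0 < P A ->
  0 < \int[P]_(t in A) (f t)%:E.
Proof.
move=> mA mf f0 PA.
have mfA : measurable_fun A (fun t => (f t)%:E).
  by apply/measurable_EFinP; exact: measurable_funTS.
rewrite lt0e integral_ge0 ?andbT; last by move=> t _; rewrite lee_fin ltW.
apply/negP => /eqP H0.
have : \int[P]_(t in A) `|(f t)%:E| = 0.
  by rewrite -H0; apply: eq_integral => t _; rewrite gee0_abs // lee_fin ltW.
move/(ae_eq_integral_abs P mA mfA) => [N [mN PN0 sub]].
have AN : A `<=` N.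
  move=> t At; apply: sub => /= /(_ At) /eqP; rewrite eqe; apply/negP; rewrite gt_eqF//.
move: PA; rewrite lt0e => /andP [/eqP []].
apply/eqP; rewrite -measure_le0 -PN0; apply: le_measure => //; rewrite inE; [exact: mA|exact: mN].
Qed.

Lemma null_of_pow (B : set T) (r : R) : measurable B -> (0 <= r)%R -> (r < 1)%R ->
  (forall n, P B <= (r ^+ n)%:E) -> P B = 0.
Proof.
move=> mB r0 r1 H.
have PB0 := measure_ge0 P B.
have fin : P B \is a fin_num.
  by rewrite ge0_fin_numE // (le_lt_trans (probability_le1 _ _)) // ltry.
rewrite -(fineK fin); congr EFin; apply/eqP; rewrite eq_le fine_ge0 // andbT.
have cv : (GRing.exp r : R ^nat) @ \oo --> 0%R by apply: cvg_expr; rewrite ger0_norm.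
rewrite -(cvg_lim _ cv) //.
apply: limr_ge; first by apply/cvg_ex; exists 0%R.
by near=> n; have := H n; rewrite -(fineK fin) lee_fin.
Unshelve. all: by end_near.
Qed.

End prob.

Theorem proposition11 (R : realType) (d : measure_display) (T : measurableType d)
  (P : probability T R) (p : nat) (v : 'cV[R]_p) (Q : 'M[R]_p)
  (X : nat -> T -> Rvec R p) (Y : nat -> T -> R) :
  (0 < p)%N ->
  (Q = 0 \/ posdef Q) ->
  (forall i, measurable_fun setT (X i)) ->
  (forall i, measurable_fun setT (Y i)) ->
  (forall i t, Y i t = 0 \/ Y i t = 1) ->
  indep_seq P (fun i t => (X i t, Y i t) : (Rvec R p * R)%type) ->
  ident_distr P (fun i t => (X i t, Y i t) : (Rvec R p * R)%type) ->
  (exists G : Rvec R p -> R,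
     [/\ measurable_fun setT G, (forall x, 0 < G x < 1) &
       forall i (B : set (Rvec R p)), measurable B ->
         P (X i @^-1` B `&` Y i @^-1` [set 1]) =
         (\int[P]_(t in X i @^-1` B) (G (X i t))%:E)%E]) ->
  (forall k l : 'I_p,
     P.-integrable setT (fun t => ((X 0 t : 'rV[R]_p) 0 k * (X 0 t : 'rV[R]_p) 0 l)%:E)) ->
  posdef (\matrix_(k < p, l < p)
            fine (\int[P]_t ((X 0 t : 'rV[R]_p) 0 k * (X 0 t : 'rV[R]_p) 0 l)%:E)%E) ->
  (forall (s : 'I_p -> bool) (beta : 'cV[R]_p), beta != 0 ->
     (0 < P [set t | ((\1_(orthant s) (X 0 t : 'rV[R]_p)
                      + \1_(orthant s) (- (X 0 t : 'rV[R]_p)))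
                     * ((X 0 t : 'rV[R]_p) *m beta) 0 0 != 0)%R])%E) ->
  {ae P, forall t, exists N : nat, forall n : nat, (N <= n)%N ->
     posterior_proper (fun i => (X i t : 'rV[R]_p)) (fun i => Y i t) v Q n}.
Proof.
move=> p0 HQ mX mY Y01 Hind Hid [G [mG G01 HG]] _ _ A3.
pose pr i t := (X i t, Y i t).
pose C (s : 'I_p -> bool) : set (Rvec R p * R) :=
  [set xy | orthant s (if xy.2 == 1 then (xy.1 : 'rV[R]_p) else - (xy.1 : 'rV[R]_p))].
have mpr i : measurable_fun setT (pr i) by exact: measurable_fun_pair.
have m1 : measurable ([set 1] : set R) by [].
have mC s : measurable (C s).
  rewrite (_ : C s = (fst @^-1` orthant s `&` snd @^-1` [set 1]) `|`
     (fst @^-1` [set x : Rvec R p | orthant s (- (x : 'rV[R]_p))] `&` snd @^-1` ~` [set 1])).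
    apply: measurableU; apply: measurableI.
    - by rewrite -[X in measurable X]setTI; apply: measurable_fst => //; exact: measurable_orthant.
    - by rewrite -[X in measurable X]setTI; exact: measurable_snd.
    - by rewrite -[X in measurable X]setTI; apply: measurable_fst => //; exact: measurable_orthantN.
    - by rewrite -[X in measurable X]setTI; apply: measurable_snd => //; exact: measurableC.
  apply/seteqP; split => -[x y] /=.
    rewrite /C /=; case: ifP => hy H; first by left; split => //; exact/eqP.
    by right; split => //=; apply/eqP; rewrite hy.
  by rewrite /C /=; case=> [[H hy]|[H /eqP /negbTE hy]]; rewrite ?hy ?eqxx.
pose k0 : 'I_p := Ordinal p0.
pose beta : 'cV[R]_p := delta_mx k0 0.
have betaE (x : 'rV[R]_p) : (x *m beta) 0 0 = x 0 k0.
  rewrite mxE (bigD1 k0) //= big1 ?addr0; first by rewrite mxE !eqxx mulr1.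
  by move=> j jk; rewrite mxE (negbTE jk) /= mulr0.
have beta0 : beta != 0.
  apply/eqP => /matrixP /(_ k0 0); rewrite !mxE !eqxx => /eqP; rewrite oner_eq0.
  by [].
have openZ : open [set x : 'rV[R]_p | x 0 k0 != 0].
  have -> : [set x : 'rV[R]_p | x 0 k0 != 0] =
    (fun x : 'rV[R]_p => x 0 k0) @^-1` ([set y : R | y < 0] `|` [set y | 0 < y]).
    by apply/seteqP; split => x /=; rewrite neq_lt => /orP.
  apply: (@open_comp _ _ (fun x : 'rV[R]_p => x 0 k0)); first by move=> x _; exact: coord_continuous.
  by apply: openU; [exact: open_lt|exact: open_gt].
have mZ : measurable (X 0%N @^-1` [set x : Rvec R p | (x : 'rV[R]_p) 0 k0 != 0]).
  rewrite -[X in measurable X]setTI; apply: mX => //.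
  by apply: sub_gen_smallest; exact: openZ.
have mO s : measurable (X 0%N @^-1` orthant s).
  by rewrite -[X in measurable X]setTI; apply: mX => //; exact: measurable_orthant.
have mON s : measurable (X 0%N @^-1` [set x : Rvec R p | orthant s (- (x : 'rV[R]_p))]).
  by rewrite -[X in measurable X]setTI; apply: mX => //; exact: measurable_orthantN.
have mY1 : measurable (Y 0%N @^-1` [set 1]).
  by rewrite -[X in measurable X]setTI; exact: mY.
have mpr0 s : measurable (pr 0 @^-1` C s).
  by rewrite -[X in measurable X]setTI; exact: mpr.
have qpos (s : 'I_p -> bool) : (0 < P (pr 0%N @^-1` C s))%E.
  have := A3 s _ beta0.
  set S := [set t | _].
  set A := X 0%N @^-1` orthant s.
  set B := X 0%N @^-1` [set x : Rvec R p | orthant s (- (x : 'rV[R]_p))].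
  have SU : S `<=` A `|` B.
    move=> t; rewrite /S /= => H.
    case: (pselect (orthant s (X 0%N t : 'rV[R]_p))) => HA; first by left.
    case: (pselect (orthant s (- (X 0%N t : 'rV[R]_p)))) => HB; first by right.
    move: H; rewrite !indicE !memNset // add0r mul0r eqxx.
    by [].
  have mS : measurable S.
    rewrite (_ : S = (A `|` B) `&` X 0%N @^-1` [set x : Rvec R p | (x : 'rV[R]_p) 0 k0 != 0]).
      by apply: measurableI => //; apply: measurableU; [exact: mO|exact: mON].
    apply/seteqP; split => t.
      move=> St; split; first exact: SU.
      by move: St; rewrite /S /= betaE mulf_eq0 negb_or => /andP[].
    move=> [HAB /= Hz]; rewrite /S /= betaE mulf_eq0 negb_or Hz andbT.
    rewrite !indicE; case: HAB => HA.
      rewrite (@mem_set _ (orthant s) (X 0%N t : 'rV[R]_p) HA) /=.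
      by rewrite paddr_eq0 ?ler01 ?ler0n // oner_eq0.
    rewrite (@mem_set _ (orthant s) (- (X 0%N t : 'rV[R]_p)) HA) /=.
    by rewrite paddr_eq0 ?ler01 ?ler0n // oner_eq0 andbF.
  move=> PS.
  have PAB : (0 < P A + P B)%E.
    apply: (lt_le_trans PS); apply: le_trans (measureU2 _ (mO s) (mON s)).
    by apply: le_measure => //; rewrite inE //; exact: measurableU.
  have [PA|PA0] := boolP (0 < P A)%E.
    apply: (@lt_le_trans _ _ (P (A `&` Y 0%N @^-1` [set 1]))).
      rewrite HG; last exact: measurable_orthant.
      apply: integral_pos => //.
      - exact: measurableT_comp.
      - by move=> t; have /andP[] := G01 (X 0%N t).
    apply: le_measure; rewrite ?inE //; first by apply: measurableI; [exact: mO|exact: mY1].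
    by move=> t [At Yt]; rewrite /pr /C /= Yt eqxx.
  have PB : (0 < P B)%E.
    move: PA0 PAB; rewrite lt0e negb_and measure_ge0 orbF negbK => /eqP ->.
    by rewrite add0e.
  apply: (@lt_le_trans _ _ (P (B `\` Y 0%N @^-1` [set 1]))); last first.
    apply: le_measure; rewrite ?inE //; first by apply: measurableD; [exact: mON|exact: mY1].
    move=> t [Bt /= Yt]; rewrite /pr /C /=; move: Yt => /eqP /negbTE ->.
    exact: Bt.
  set J := (\int[P]_(t in B) (G (X 0%N t))%:E)%E.
  have HJ : P (B `&` Y 0%N @^-1` [set 1]) = J := HG 0%N _ (measurable_orthantN s).
  have h1' : P B = (P (B `\` Y 0%N @^-1` [set 1%R]) + J)%E.
    by rewrite -HJ; apply: measureDI; [exact: mON|exact: mY1].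
  have Jfin : J \is a fin_num.
    rewrite -HJ ge0_fin_numE; last exact: measure_ge0.
    apply: (le_lt_trans (probability_le1 _ _)); last exact: ltry.
    by apply: measurableI; [exact: mON|exact: mY1].
  have mGX : measurable_fun setT (fun t => G (X 0%N t)) by exact: measurableT_comp.
  have PBe : P B = (\int[P]_(t in B) (1 - G (X 0%N t))%:E + J)%E.
    rewrite /J -ge0_integralD //.
    - transitivity (\int[P]_(t in B) (cst 1%:E) t)%E; first by rewrite integral_cst ?mul1e //; exact: mON.
      apply: eq_integral => t _; rewrite /= -EFinD subrK //.
    - exact: mON.
    - by move=> t _; have /andP[_ h] := G01 (X 0%N t); rewrite lee_fin subr_ge0 ltW.
    - apply/measurable_EFinP; apply: measurable_funTS; apply: measurable_funB => //.
    - by move=> t _; have /andP[h _] := G01 (X 0%N t); rewrite lee_fin ltW.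
    - by apply/measurable_EFinP; apply: measurable_funTS.
  have E2eq : P (B `\` Y 0%N @^-1` [set 1]) = (\int[P]_(t in B) (1 - G (X 0%N t))%:E)%E.
    by rewrite -[LHS](addeK _ Jfin) -h1' PBe addeK.
  rewrite E2eq.
  apply: integral_pos => //; first exact: mON.
  - by apply: measurable_funB.
  - by move=> t; have /andP[_ h] := G01 (X 0%N t); rewrite subr_gt0.
have ae_s (s : {ffun 'I_p -> bool}) : {ae P, forall t, exists i, C s (pr i t)}.
  have mCc : measurable (~` C s) by exact: measurableC.
  have mpri i : measurable (pr i @^-1` ~` C s).
    by rewrite -[X in measurable X]setTI; exact: mpr.
  set q := fine (P (pr 0%N @^-1` C s)).
  have qfin : P (pr 0%N @^-1` C s) \is a fin_num.
    rewrite ge0_fin_numE; last exact: measure_ge0.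
    by apply: (le_lt_trans (probability_le1 _ _)); [exact: mpr0|exact: ltry].
  have q0 : (0 < q)%R by rewrite /q fine_gt0 // qpos /= ltey_eq qfin.
  have q1 : (q <= 1)%R.
    by rewrite /q -lee_fin fineK //; apply: probability_le1 => //; exact: mpr0.
  have Pc i : P (pr i @^-1` ~` C s) = (1 - q)%:E.
    rewrite (Hid i (~` C s) mCc) -preimage_setC (probability_setC P (mpr0 s)).
    by rewrite EFinB /q fineK.
  pose Bad := \bigcap_i (pr i @^-1` ~` C s).
  exists Bad; split.
  - by apply: bigcapT_measurable => i; exact: mpri.
  - apply: (@null_of_pow _ _ _ P Bad (1 - q)).
    + by apply: bigcapT_measurable => i; exact: mpri.
    + by rewrite subr_ge0.
    + by rewrite ltrBlDr ltrDl.
    + move=> n.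
      have sub : Bad `<=` \bigcap_(i in [set` index_iota 0 n]) (pr i @^-1` ~` C s).
        by move=> t Bt i _; exact: Bt.
      apply: (@le_trans _ _ (P (\bigcap_(i in [set` index_iota 0 n]) (pr i @^-1` ~` C s)))).
        apply: le_measure sub; rewrite inE.
        * by apply: bigcapT_measurable => i; exact: mpri.
        * by apply: bigcap_measurableType => i _; exact: mpri.
      have HI : P (\bigcap_(i in [set` index_iota 0 n]) (pr i @^-1` ~` C s)) =
          (\prod_(i <- index_iota 0 n) P (pr i @^-1` ~` C s))%E :=
        Hind (index_iota 0 n) (fun=> ~` C s) (iota_uniq 0 (n - 0)) (fun=> mCc).
      rewrite HI.
      rewrite (eq_bigr (fun=> (1 - q)%:E)); last by move=> i _; exact: Pc.
      by rewrite prodEFin prodr_const_nat subn0.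
  - move=> t /= Hn i _ /= Ci; apply: Hn; exists i; exact: Ci.
have ae_all : {ae P, forall t, forall s : {ffun 'I_p -> bool}, exists i, C s (pr i t)}.
  suff H : forall r : seq {ffun 'I_p -> bool},
      {ae P, forall t, forall s, s \in r -> exists i, C s (pr i t)}.
    by apply: filterS (H (enum {ffun 'I_p -> bool})) => t Ht s; apply: Ht; rewrite mem_enum.
  elim => [|a r IH]; first by apply: aeW => t s; rewrite in_nil.
  apply: filterS2 (ae_s a) IH => t Ha Hr s; rewrite in_cons => /orP [/eqP -> //|].
  exact: Hr.
apply: filterS ae_all => t Ht.
pose z i := (if Y i t == 1 then (X i t : 'rV[R]_p) else - (X i t : 'rV[R]_p)).
have H1 : forall s : {ffun 'I_p -> bool}, exists m, 0 < m /\
    (fun s m => exists i, C s (pr i t) /\ forall k, m <= `|z i 0 k|) s m.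
  move=> s; have [i Ci] := Ht s.
  have K1 : forall k : 'I_p, exists m, 0 < m /\ (fun k m => m <= `|z i 0 k|) k m.
    move=> k; exists `|z i 0 k|; split => //; rewrite normr_gt0.
    by move: (Ci k); rewrite /z /=; case: (s k) => h; rewrite ?(gt_eqF h) ?(lt_eqF h).
  have K2 : forall (k : 'I_p) a b, (fun k m => m <= `|z i 0 k|) k a -> 0 < b -> b <= a ->
      (fun k m => m <= `|z i 0 k|) k b.
    by move=> k a b /= h _ ba; exact: le_trans ba h.
  have [m [m0 Hk]] := @fin_min R _ _ K1 K2.
  by exists m; split => //; exists i.
have H2 : forall (s : {ffun 'I_p -> bool}) m1 m2,
    (fun s m => exists i, C s (pr i t) /\ forall k, m <= `|z i 0 k|) s m1 -> 0 < m2 -> m2 <= m1 ->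
    (fun s m => exists i, C s (pr i t) /\ forall k, m <= `|z i 0 k|) s m2.
  move=> a u1 u2 [i [Ci Hk]] _ h; exists i; split => // k; exact: le_trans h (Hk k).
have [m [m0 Hm]] := @fin_min R _ _ H1 H2.
have H3 : forall s : {ffun 'I_p -> bool}, exists N,
    (fun s N => exists i, (i < N)%N /\ C s (pr i t) /\ forall k, m <= `|z i 0 k|) s N.
  by move=> s; have [i Hi] := Hm s; exists i.+1, i.
have H4 : forall (s : {ffun 'I_p -> bool}) N1 N2,
    (fun s N => exists i, (i < N)%N /\ C s (pr i t) /\ forall k, m <= `|z i 0 k|) s N1 ->
    (N1 <= N2)%N ->
    (fun s N => exists i, (i < N)%N /\ C s (pr i t) /\ forall k, m <= `|z i 0 k|) s N2.
  by move=> a N1 N2 [i [iN H]] h; exists i; split => //; exact: leq_trans iN h.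
have [N HN] := @fin_max _ _ H3 H4.
exists N => n Nn.
apply: (@det_proper R p _ _ v Q n m HQ m0) => s.
have [i [iN [Ci Hk]]] := HN s; exists i; split; first exact: leq_trans iN Nn.
by split; [exact: Ci|exact: Hk].
Qed.
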